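(* Let $\varphi_0\in\mathbb{R}$ and let $v$ be a smooth function with $v(\varphi)>0$ and $v'(\varphi)>0$ for all $\varphi\ge\varphi_0$, and suppose that $v$ grows faster than $e^{2\varphi}$ as $\varphi\to\infty$, i.e. $v(\varphi)e^{-2\varphi}\to\infty$. Then every solution of $h'=\sqrt{h^2-v}$ with initial value $h(\varphi_0)=h_0>\sqrt{v(\varphi_0)}$ reaches the curve $h=\sqrt{v(\varphi)}$ at a finite value of $\varphi$ (i.e., all solutions are of type A), and consequently there is no separatrix.
   Context: A solution of $h'=\sqrt{h^2-v}$ in $R_0=\{(\varphi,h):\varphi\ge\varphi_0,\ h>\sqrt{v(\varphi)}\}$ is of type A if it leaves $R_0$ by reaching the lower boundary $h=\sqrt{v(\varphi)}$ at a finite $\varphi$, and of type B if it remains in $R_0$ for all $\varphi>\varphi_0$. A separatrix exists only if both types occur; it is then the solution whose initial value $h(\varphi_0)$ equals the common boundary value $r$ between the initial values of type-A solutions (below $r$) and type-B solutions (above $r$). *)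

(* Defs.v *)
From Stdlib Require Import Reals.
From Coquelicot Require Import Coquelicot.
Open Scope R_scope.

Definition smooth_from (v : R -> R) (phi0 : R) : Prop :=
  forall (n : nat) (x : R), phi0 <= x -> ex_derive (Derive_n v n) x.

Definition ode_rhs (v : R -> R) (x y : R) : R := sqrt (y ^ 2 - v x).

Definition typeA (v : R -> R) (phi0 : R) (h : R -> R) (phi1 : R) : Prop :=
  phi0 < phi1 /\
  filterlim h (at_right phi0) (locally (h phi0)) /\
  filterlim h (at_left phi1) (locally (h phi1)) /\
  (forall x, phi0 < x < phi1 -> is_derive h x (ode_rhs v x (h x))) /\
  (forall x, phi0 <= x < phi1 -> sqrt (v x) < h x) /\
  h phi1 = sqrt (v phi1).

Definition typeB (v : R -> R) (phi0 : R) (h : R -> R) : Prop :=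
  filterlim h (at_right phi0) (locally (h phi0)) /\
  (forall x, phi0 < x -> is_derive h x (ode_rhs v x (h x))) /\
  (forall x, phi0 <= x -> sqrt (v x) < h x).

(* A separatrix exists only if both types occur; it is the solution whose
   initial value is the common boundary r between the initial values of
   type-A solutions (below r) and type-B solutions (above r). *)
Definition has_separatrix (v : R -> R) (phi0 : R) : Prop :=
  (exists h phi1, typeA v phi0 h phi1) /\
  (exists h, typeB v phi0 h) /\
  exists r : R,
    (forall h phi1, typeA v phi0 h phi1 -> h phi0 <= r) /\
    (forall h, typeB v phi0 h -> r <= h phi0) /\
    (forall h0, sqrt (v phi0) < h0 < r -> exists h phi1, h phi0 = h0 /\ typeA v phi0 h phi1) /\
    (forall h0, r < h0 -> exists h, h phi0 = h0 /\ typeB v phi0 h).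

(* Main.v *)
Require Import Defs.
From Stdlib Require Import Reals Lra Lia Classical.
From Coquelicot Require Import Coquelicot.
Open Scope R_scope.

Lemma lip_cont (f : R -> R) x L : 0 < L ->
  (forall y, Rabs (f y - f x) <= L * Rabs (y - x)) -> continuous f x.
Proof.
intros HL H. apply filterlim_locally. intros eps.
assert (He : 0 < eps / L) by (apply Rdiv_lt_0_compat; [apply cond_pos|lra]).
exists (mkposreal _ He). intros y Hy.
change (Rabs (f y - f x) < eps).
change (Rabs (y - x) < eps / L) in Hy.
specialize (H y).
apply Rle_lt_trans with (1 := H).
apply Rmult_lt_reg_r with (/ L). apply Rinv_0_lt_compat; lra.
replace (L * Rabs (y - x) * / L) with (Rabs (y - x)) by (field; lra).
exact Hy.
Qed.

Lemma deriv_cont_pt (f : R -> R) (x l : R) : is_derive f x l -> continuity_pt f x.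
Proof. intro H. apply derivable_continuous_pt. exists l. apply is_derive_Reals. exact H. Qed.

Lemma deriv_cont (f : R -> R) (x l : R) : is_derive f x l -> continuous f x.
Proof. intro H. apply continuity_pt_filterlim. eapply deriv_cont_pt; eauto. Qed.

Lemma right_cont_eps h a : filterlim h (at_right a) (locally (h a)) ->
  forall eps, 0 < eps -> exists del, 0 < del /\ forall u, a < u < a + del -> Rabs (h u - h a) < eps.
Proof.
intros H eps He. destruct (proj1 (filterlim_locally h (h a)) H (mkposreal _ He)) as [d Hd].
exists d. split. apply cond_pos. intros u Hu. apply (Hd u).
change (Rabs (u - a) < d). rewrite Rabs_right; lra. lra.
Qed.

Lemma gronwall a x h d : a < x -> 0 <= h a ->
  filterlim h (at_right a) (locally (h a)) -> continuous h x ->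
  (forall s, a < s < x -> is_derive h s (d s) /\ d s <= h s) ->
  h x <= h a * exp (x - a).
Proof.
intros Hax Ha Hr Hc Hd.
set (p := fun s => h s * exp (- s)).
assert (Hp : forall u, a < u < x -> p x <= p u).
{ intros u Hu.
  assert (Hder : forall s, a < s < x -> is_derive p s ((d s - h s) * exp (- s))).
  { intros s Hs. destruct (Hd s Hs) as [H1 _]. unfold p.
    assert (E : d s = Derive h s) by (symmetry; apply is_derive_unique; exact H1).
    auto_derive. exists (d s); exact H1. rewrite E. replace (Derive (fun x => h x) s) with (Derive h s) by reflexivity. ring.
    }
  set (df := fun s => Rmin 0 ((d s - h s) * exp (- s))).
  assert (Hc' : forall z, u <= z <= x -> continuity_pt p z).
  { intros z Hz. 
    destruct (Req_dec z x) as [->|Hzx].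
    - apply continuity_pt_filterlim. unfold p. apply (continuous_mult h (fun s => exp (- s))). exact Hc.
      apply (deriv_cont (fun s => exp (- s)) x (- exp (- x))). auto_derive. auto. ring.
    - eapply deriv_cont_pt. apply Hder. lra. }
  destruct (MVT_gen p u x df) as [c [Hc1 Hc2]].
  - rewrite Rmin_left, Rmax_right by lra. intros s Hs.
    unfold df. rewrite Rmin_right. apply Hder; lra.
    destruct (Hd s) as [_ H2]. lra.
    apply Rmult_le_0_r. lra. apply Rlt_le, exp_pos.
  - rewrite Rmin_left, Rmax_right by lra. exact Hc'.
  - rewrite Rmin_left, Rmax_right in Hc1 by lra.
    assert (df c <= 0) by (unfold df; apply Rmin_l).
    assert (df c * (x - u) <= 0) by (apply Rmult_le_0_r; lra).
    lra. }
assert (Hpa : forall eps, 0 < eps -> p x <= (h a + eps) * exp (- a)).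
{ intros eps He. destruct (right_cont_eps h a Hr eps He) as [del [Hdel Hu]].
  set (u := Rmin (a + del / 2) ((a + x) / 2)).
  assert (Hu1 : a < u < x).
  { unfold u. split; [apply Rmin_glb_lt; lra|]. apply Rle_lt_trans with ((a+x)/2); [apply Rmin_r|lra]. }
  assert (Hu2 : u < a + del) by (unfold u; apply Rle_lt_trans with (a + del/2); [apply Rmin_l|lra]).
  specialize (Hu u (conj (proj1 Hu1) Hu2)).
  apply Rle_trans with (1 := Hp u Hu1). unfold p.
  apply Rabs_lt_between' in Hu.
  destruct (Rle_lt_dec 0 (h u)) as [H0|H0].
  - apply Rmult_le_compat; try lra.
    apply Rlt_le, exp_pos.
    apply Rlt_le, exp_increasing. lra.
  - apply Rle_trans with 0.
    apply Rmult_le_0_r. lra. apply Rlt_le, exp_pos.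
    apply Rmult_le_pos. lra. apply Rlt_le, exp_pos. }
assert (Hpa' : p x <= h a * exp (- a)).
{ apply Rnot_lt_le. intro Hlt.
  set (eps := (p x - h a * exp (- a)) / (2 * exp (- a))).
  assert (Hea : 0 < exp (- a)) by apply exp_pos.
  assert (He : 0 < eps) by (unfold eps; apply Rdiv_lt_0_compat; lra).
  specialize (Hpa eps He). unfold eps in Hpa.
  replace ((h a + (p x - h a * exp (- a)) / (2 * exp (- a))) * exp (- a))
    with (h a * exp (-a) + (p x - h a * exp (- a)) / 2) in Hpa by (field; lra).
  lra. }
unfold p in Hpa'.
replace (x - a) with (x + - a) by ring. rewrite exp_plus.
apply Rmult_le_reg_r with (exp (- x)). apply exp_pos.
replace (h a * (exp x * exp (- a)) * exp (- x)) with (h a * exp (- a) * (exp x * exp (- x))) by ring.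
rewrite <- exp_plus. replace (x + - x) with 0 by ring. rewrite exp_0. lra.
Qed.

Lemma growth (v : R -> R)
  (Hgrowth : is_lim (fun x => v x * exp (- (2 * x))) p_infty p_infty) :
  forall C M, exists x, M < x /\ C * exp (2 * x) < v x.
Proof.
intros C M.
assert (H : Rbar_locally p_infty (fun x => C < v x * exp (- (2 * x)))).
{ apply Hgrowth. exists C. intros y Hy. exact Hy. }
destruct H as [N HN].
exists (Rmax M N + 1). split. generalize (Rmax_l M N); lra.
specialize (HN (Rmax M N + 1)). assert (HH : N < Rmax M N + 1) by (generalize (Rmax_r M N); lra).
specialize (HN HH).
set (x := Rmax M N + 1) in *.
apply Rmult_lt_compat_r with (r := exp (2 * x)) in HN. 2: apply exp_pos.
rewrite Rmult_assoc, <- exp_plus in HN. replace (- (2 * x) + 2 * x) with 0 in HN by ring.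
rewrite exp_0 in HN. lra.
Qed.

Lemma sqrt_rhs_le y w : 0 <= y -> 0 <= w -> sqrt (y ^ 2 - w) <= y.
Proof.
intros Hy Hw. rewrite <- (sqrt_pow2 y Hy) at 2. apply sqrt_le_1_alt. lra.
Qed.

Lemma sqrt_lt_sq a y : 0 < a -> sqrt a < y -> a < y ^ 2.
Proof.
intros Ha H. assert (0 <= sqrt a) by apply sqrt_pos.
rewrite <- (sqrt_sqrt a) by lra. nra.
Qed.

Lemma exp_bound_contra (v : R -> R) phi0
  (Hgrowth : is_lim (fun x => v x * exp (- (2 * x))) p_infty p_infty) (K : R) :
  0 <= K -> exists x, phi0 < x /\ (K * exp (x - phi0)) ^ 2 < v x.
Proof.
intros HK. destruct (growth v Hgrowth (K ^ 2 * exp (- (2 * phi0))) phi0) as [x [Hx Hv]].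
exists x. split; auto.
replace ((K * exp (x - phi0)) ^ 2) with (K ^ 2 * exp (- (2 * phi0)) * exp (2 * x)). exact Hv.
replace (x - phi0) with (x + - phi0) by ring. rewrite exp_plus.
replace (- (2 * phi0)) with (- phi0 + - phi0) by ring.
replace (2 * x) with (x + x) by ring. rewrite !exp_plus. ring.
Qed.

Lemma noB (phi0 : R) (v : R -> R)
  (Hpos : forall x, phi0 <= x -> 0 < v x)
  (Hgrowth : is_lim (fun x => v x * exp (- (2 * x))) p_infty p_infty) h :
  ~ typeB v phi0 h.
Proof.
intros [Hr [Hd Hgt]].
assert (H0 : 0 < h phi0).
{ apply Rle_lt_trans with (sqrt (v phi0)). apply sqrt_pos. apply Hgt; lra. }
destruct (exp_bound_contra v phi0 Hgrowth (h phi0) (Rlt_le _ _ H0)) as [x [Hx Hv]].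
assert (Hg : h x <= h phi0 * exp (x - phi0)).
{ apply (gronwall phi0 x h (fun s => ode_rhs v s (h s))); auto. lra.
  eapply deriv_cont. apply Hd. lra.
  intros s Hs. split. apply Hd. lra.
  unfold ode_rhs. apply sqrt_rhs_le.
  apply Rle_trans with (sqrt (v s)). apply sqrt_pos. apply Rlt_le, Hgt; lra.
  apply Rlt_le, Hpos; lra. }
assert (Hs := sqrt_lt_sq (v x) (h x) (Hpos x ltac:(lra)) (Hgt x ltac:(lra))).
assert (0 <= h x) by (apply Rle_trans with (sqrt (v x)); [apply sqrt_pos|apply Rlt_le, Hgt; lra]).
assert (h x ^ 2 <= (h phi0 * exp (x - phi0)) ^ 2) by (apply pow_incr; lra).
lra.
Qed.

Lemma cont_eps (f : R -> R) x : continuous f x ->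
  forall eps, 0 < eps -> exists del, 0 < del /\ forall y, Rabs (y - x) < del -> Rabs (f y - f x) < eps.
Proof.
intros H eps He. destruct (proj1 (filterlim_locally f (f x)) H (mkposreal _ He)) as [d Hd].
exists d. split. apply cond_pos. intros y Hy. apply (Hd y). exact Hy.
Qed.

Lemma RInt_cont_ex (k : R -> R) a c : (forall s, continuous k s) -> ex_RInt k a c.
Proof. intros H. apply (ex_RInt_continuous (V:=R_CompleteNormedModule)). intros; apply H. Qed.

Lemma RInt_abs_bound (k : R -> R) a c M : (forall s, continuous k s) ->
  (forall s, Rmin a c <= s <= Rmax a c -> Rabs (k s) <= M) ->
  Rabs (RInt k a c) <= Rabs (c - a) * M.
Proof.
intros Hk HM. destruct (Rle_lt_dec a c) as [H|H].
- rewrite (Rabs_right (c - a)) by lra. apply abs_RInt_le_const. lra. apply RInt_cont_ex; auto.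
  intros t Ht. apply HM. rewrite Rmin_left, Rmax_right; lra.
- rewrite <- opp_RInt_swap by (apply RInt_cont_ex; auto).
  change (Rabs (- RInt k c a) <= Rabs (c - a) * M). rewrite Rabs_Ropp.
  rewrite (Rabs_left (c - a)) by lra. replace (- (c - a)) with (a - c) by ring.
  apply abs_RInt_le_const. lra. apply RInt_cont_ex; auto.
  intros t Ht. apply HM. rewrite Rmin_right, Rmax_left; lra.
Qed.

Lemma RInt_diff_pt (k : R -> R) a y1 y2 : (forall s, continuous k s) ->
  RInt k a y1 - RInt k a y2 = RInt k y2 y1.
Proof.
intros Hk. rewrite <- (RInt_Chasles k a y2 y1) by (apply RInt_cont_ex; auto).
change (RInt k a y2 + RInt k y2 y1 - RInt k a y2 = RInt k y2 y1). ring.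
Qed.

Lemma RInt_sub (f1 f2 : R -> R) a c : (forall s, continuous f1 s) -> (forall s, continuous f2 s) ->
  RInt f1 a c - RInt f2 a c = RInt (fun s => f1 s - f2 s) a c.
Proof.
intros H1 H2. symmetry. apply (RInt_minus f1 f2); apply RInt_cont_ex; auto.
Qed.

Lemma cont_minus_R (f1 f2 : R -> R) x : continuous f1 x -> continuous f2 x ->
  continuous (fun s => f1 s - f2 s) x.
Proof. intros. apply (continuous_minus f1 f2); auto. Qed.

Lemma cont_plus_R (f1 f2 : R -> R) x : continuous f1 x -> continuous f2 x ->
  continuous (fun s => f1 s + f2 s) x.
Proof. intros. apply (continuous_plus f1 f2); auto. Qed.

Lemma cont_mult_R (f1 f2 : R -> R) x : continuous f1 x -> continuous f2 x ->
  continuous (fun s => f1 s * f2 s) x.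
Proof. intros. apply (continuous_mult f1 f2); auto. Qed.

Lemma cont_rhs (g w : R -> R) x : continuous g x -> continuous w x ->
  continuous (fun s => sqrt (g s ^ 2 - w s)) x.
Proof.
intros Hg Hw. apply (continuous_comp (fun s => g s ^ 2 - w s) sqrt).
apply cont_minus_R; auto.
apply (continuous_ext (fun s => g s * (g s * 1))). intros; simpl; ring.
apply cont_mult_R; auto. apply cont_mult_R; auto. apply continuous_const.
apply continuous_sqrt.
Qed.

Lemma is_derive_RInt_all (k : R -> R) a y : (forall s, continuous k s) ->
  is_derive (fun y => RInt k a y) y (k y).
Proof.
intros Hk. apply (is_derive_RInt (V:=R_NormedModule) k (fun y => RInt k a y) a y). apply filter_forall. intros z. apply (RInt_correct (V:=R_CompleteNormedModule)). apply RInt_cont_ex; auto.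
apply Hk.
Qed.

Lemma sqrt_diff a c : a <= c -> sqrt c - sqrt a <= sqrt (c - a).
Proof.
intros H. destruct (Rle_lt_dec 0 a) as [Ha|Ha].
- assert (0 <= sqrt a) by apply sqrt_pos. assert (0 <= sqrt (c - a)) by apply sqrt_pos.
  assert (sqrt c <= sqrt a + sqrt (c - a)); [|lra].
  rewrite <- (sqrt_pow2 (sqrt a + sqrt (c - a))) by lra. apply sqrt_le_1_alt.
  replace ((sqrt a + sqrt (c - a)) ^ 2) with (sqrt a ^ 2 + sqrt (c - a) ^ 2 + 2 * sqrt a * sqrt (c - a)) by ring.
  rewrite !pow2_sqrt by lra. nra.
- rewrite (sqrt_neg_0 a) by lra. assert (sqrt c <= sqrt (c - a)) by (apply sqrt_le_1_alt; lra). lra.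
Qed.

Definition clamp (a b x : R) := Rmax a (Rmin x b).

Lemma clamp_in a b x : a <= b -> a <= clamp a b x <= b.
Proof. intros. unfold clamp. unfold Rmax, Rmin. repeat destruct Rle_dec; lra. Qed.

Lemma clamp_id a b x : a <= x <= b -> clamp a b x = x.
Proof. intros. unfold clamp. unfold Rmax, Rmin. repeat destruct Rle_dec; lra. Qed.

Lemma clamp_lip a b x y : a <= b -> Rabs (clamp a b x - clamp a b y) <= Rabs (x - y).
Proof.
intros. unfold clamp. unfold Rmax, Rmin. unfold Rabs.
repeat destruct Rle_dec; repeat destruct Rcase_abs; lra.
Qed.

Lemma clamp_clamp a b x : a <= b -> clamp a b (clamp a b x) = clamp a b x.
Proof. intros. apply clamp_id. apply clamp_in; auto. Qed.

Lemma clamp_cont a b x : a <= b -> continuous (clamp a b) x.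
Proof.
intros H. apply (lip_cont _ x 1). lra. intros y. rewrite Rmult_1_l. apply clamp_lip; auto.
Qed.

Definition Fs (v : R -> R) a b s y := sqrt (y ^ 2 - v (clamp a b s)).

Fixpoint G (v : R -> R) a b h0 (n : nat) (x : R) : R :=
  match n with
  | O => h0
  | S m => h0 + RInt (fun s => Fs v a b s (G v a b h0 m s)) a (clamp a b x)
  end.

Lemma w_cont (v : R -> R) a b : a <= b -> (forall x, a <= x <= b -> continuous v x) ->
  forall s, continuous (fun s => v (clamp a b s)) s.
Proof.
intros Hab Hv s. apply (continuous_comp (clamp a b) v). apply clamp_cont; auto.
apply Hv. apply clamp_in; auto.
Qed.

Lemma G_cont v a b h0 : a <= b -> (forall x, a <= x <= b -> continuous v x) ->
  forall n x, continuous (G v a b h0 n) x.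
Proof.
intros Hab Hv n. induction n as [|n IH]; intros x.
- apply continuous_const.
- simpl. apply (continuous_comp (clamp a b) (fun y => h0 + RInt (fun s => Fs v a b s (G v a b h0 n s)) a y)).
  apply clamp_cont; auto.
  eapply deriv_cont. 
  apply (is_derive_plus (fun _ => h0) (fun y => RInt (fun s => Fs v a b s (G v a b h0 n s)) a y)).
  apply is_derive_const. apply is_derive_RInt_all.
  intros s. unfold Fs. apply (cont_rhs (G v a b h0 n) (fun s => v (clamp a b s))). apply IH.
  apply w_cont; auto.
Qed.

Lemma k_cont v a b (g : R -> R) : a <= b -> (forall x, a <= x <= b -> continuous v x) ->
  (forall s, continuous g s) -> forall s, continuous (fun s => Fs v a b s (g s)) s.
Proof.
intros Hab Hv Hg s. unfold Fs. apply (cont_rhs g (fun s => v (clamp a b s))). apply Hg.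
apply w_cont; auto.
Qed.

Lemma Fs_mono v a b s y1 y2 : 0 <= y1 <= y2 -> Fs v a b s y1 <= Fs v a b s y2.
Proof. intros H. unfold Fs. apply sqrt_le_1_alt. nra. Qed.

Lemma Fs_le v a b s y : a <= b -> (forall x, a <= x <= b -> 0 < v x) -> 0 <= y -> Fs v a b s y <= y.
Proof. intros Hab Hp Hy. unfold Fs. apply sqrt_rhs_le; auto. apply Rlt_le, Hp, clamp_in; auto. Qed.

Lemma G_clamp v a b h0 n x : a <= b -> G v a b h0 n (clamp a b x) = G v a b h0 n x.
Proof. intros. destruct n; simpl; auto. rewrite clamp_clamp; auto. Qed.

Lemma G_a v a b h0 n : a <= b -> G v a b h0 n a = h0.
Proof.
intros. destruct n; simpl; auto. rewrite clamp_id by lra. rewrite RInt_point. change (h0 + 0 = h0). ring.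
Qed.

Lemma G_incr v a b h0 : a <= b -> 0 < h0 -> (forall x, a <= x <= b -> continuous v x) ->
  forall n x, h0 <= G v a b h0 n x /\ G v a b h0 n x <= G v a b h0 (S n) x.
Proof.
intros Hab Hh Hv n. induction n as [|n IH]; intros x.
- simpl. split. lra.
  assert (0 <= RInt (fun s => Fs v a b s h0) a (clamp a b x)); [|lra].
  apply RInt_ge_0. apply clamp_in; auto. apply RInt_cont_ex. apply (k_cont v a b (fun _ => h0)); auto.
  intros; apply continuous_const.
  intros; unfold Fs; apply sqrt_pos.
- destruct (IH x) as [H1 H2]. split. lra.
  change (h0 + RInt (fun s => Fs v a b s (G v a b h0 n s)) a (clamp a b x) <=
          h0 + RInt (fun s => Fs v a b s (G v a b h0 (S n) s)) a (clamp a b x)).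
  apply Rplus_le_compat_l. apply RInt_le. apply clamp_in; auto.
  apply RInt_cont_ex. apply k_cont; auto. apply G_cont; auto.
  apply RInt_cont_ex. apply k_cont; auto. apply G_cont; auto.
  intros s _. apply Fs_mono. destruct (IH s). lra.
Qed.

Lemma G_deriv v a b h0 : a <= b -> (forall x, a <= x <= b -> continuous v x) ->
  forall n x, a < x < b -> is_derive (G v a b h0 (S n)) x (Fs v a b x (G v a b h0 n x)).
Proof.
intros Hab Hv n x Hx.
apply (is_derive_ext_loc (fun y => h0 + RInt (fun s => Fs v a b s (G v a b h0 n s)) a y)).
- assert (Hd : 0 < Rmin (x - a) (b - x)) by (apply Rmin_glb_lt; lra).
  exists (mkposreal _ Hd). intros y Hy. change (Rabs (y - x) < Rmin (x - a) (b - x)) in Hy.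
  assert (Rabs (y - x) < x - a) by (eapply Rlt_le_trans; [exact Hy|apply Rmin_l]).
  assert (Rabs (y - x) < b - x) by (eapply Rlt_le_trans; [exact Hy|apply Rmin_r]).
  apply Rabs_lt_between' in H. apply Rabs_lt_between' in H0.
  simpl. rewrite (clamp_id a b y) by lra. reflexivity.
- evar (l : R). replace (Fs v a b x (G v a b h0 n x)) with l.
  apply (is_derive_plus (fun _ => h0) (fun y => RInt (fun s => Fs v a b s (G v a b h0 n s)) a y)).
  apply is_derive_const. apply is_derive_RInt_all.
  apply k_cont; auto. apply G_cont; auto.
  unfold l. change (0 + Fs v a b x (G v a b h0 n x) = Fs v a b x (G v a b h0 n x)). ring.
Qed.

Lemma cont_right (f : R -> R) x : continuous f x -> filterlim f (at_right x) (locally (f x)).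
Proof. intros H. eapply filterlim_filter_le_1. apply filter_le_within. exact H. Qed.

Lemma cont_left (f : R -> R) x : continuous f x -> filterlim f (at_left x) (locally (f x)).
Proof. intros H. eapply filterlim_filter_le_1. apply filter_le_within. exact H. Qed.

Lemma G_bound v a b h0 : a < b -> 0 < h0 -> (forall x, a <= x <= b -> continuous v x) ->
  (forall x, a <= x <= b -> 0 < v x) ->
  forall n x, G v a b h0 n x <= h0 * exp (b - a).
Proof.
intros Hab Hh Hv Hp n x.
assert (He : forall y, a <= y <= b -> h0 * exp (y - a) <= h0 * exp (b - a)).
{ intros y Hy. apply Rmult_le_compat_l. lra. destruct (Req_dec y b). subst; lra.
  apply Rlt_le, exp_increasing; lra. }
assert (H1 : h0 <= h0 * exp (b - a)).
{ rewrite <- (Rmult_1_r h0) at 1. apply Rmult_le_compat_l. lra. rewrite <- exp_0.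
  apply Rlt_le, exp_increasing; lra. }
destruct n as [|n]. simpl; auto.
rewrite <- G_clamp by lra. assert (Hy := clamp_in a b x (Rlt_le _ _ Hab)).
set (y := clamp a b x) in *.
destruct (Req_dec y a) as [E|E]. rewrite E, G_a by lra. auto.
eapply Rle_trans. 2: apply (He y Hy).
rewrite <- (G_a v a b h0 (S n)) at 2 by lra.
apply (gronwall a y (G v a b h0 (S n)) (fun s => Fs v a b s (G v a b h0 n s))).
- lra.
- rewrite G_a by lra. lra.
- apply cont_right. apply G_cont; [lra|auto].
- apply G_cont; [lra|auto].
- intros s Hs. split. apply G_deriv; [lra|auto|lra].
  apply Rle_trans with (G v a b h0 n s). apply Fs_le; auto. lra.
  destruct (G_incr v a b h0 (Rlt_le _ _ Hab) Hh Hv n s). lra.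
  apply (G_incr v a b h0 (Rlt_le _ _ Hab) Hh Hv n s).
Qed.

Lemma G_lip v a b h0 : a < b -> 0 < h0 -> (forall x, a <= x <= b -> continuous v x) ->
  (forall x, a <= x <= b -> 0 < v x) ->
  forall n x y, Rabs (G v a b h0 n x - G v a b h0 n y) <= h0 * exp (b - a) * Rabs (x - y).
Proof.
intros Hab Hh Hv Hp n x y.
assert (HB : 0 <= h0 * exp (b - a)) by (apply Rmult_le_pos; [lra|apply Rlt_le, exp_pos]).
destruct n as [|n].
- simpl. replace (h0 - h0) with 0 by ring. rewrite Rabs_R0. apply Rmult_le_pos; auto. apply Rabs_pos.
- simpl. replace (h0 + RInt (fun s => Fs v a b s (G v a b h0 n s)) a (clamp a b x) -
   (h0 + RInt (fun s => Fs v a b s (G v a b h0 n s)) a (clamp a b y))) with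
   (RInt (fun s => Fs v a b s (G v a b h0 n s)) a (clamp a b x) -
    RInt (fun s => Fs v a b s (G v a b h0 n s)) a (clamp a b y)) by ring.
  rewrite RInt_diff_pt by (apply k_cont; [lra|auto|apply G_cont; [lra|auto]]).
  eapply Rle_trans. apply RInt_abs_bound. apply k_cont; [lra|auto|apply G_cont; [lra|auto]].
  intros s _. 
  { rewrite Rabs_right. eapply Rle_trans. apply Fs_le; auto. lra.
    destruct (G_incr v a b h0 (Rlt_le _ _ Hab) Hh Hv n s). lra.
    apply G_bound; auto. apply Rle_ge. unfold Fs; apply sqrt_pos. }
  rewrite Rmult_comm. apply Rmult_le_compat_l; auto. rewrite <- Rabs_Ropp.
  replace (- (clamp a b x - clamp a b y)) with (clamp a b y - clamp a b x) by ring.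
  rewrite Rabs_minus_sym. rewrite (Rabs_minus_sym x y). rewrite Rabs_minus_sym. apply clamp_lip. lra.
Qed.

Definition glim v a b h0 x := real (Lim_seq (fun n => G v a b h0 n x)).

Lemma glim_lim v a b h0 : a < b -> 0 < h0 -> (forall x, a <= x <= b -> continuous v x) ->
  (forall x, a <= x <= b -> 0 < v x) ->
  forall x, is_lim_seq (fun n => G v a b h0 n x) (glim v a b h0 x) /\
    glim v a b h0 x <= h0 * exp (b - a).
Proof.
intros Hab Hh Hv Hp x.
set (u := fun n => G v a b h0 n x).
assert (Hi : forall n, u n <= u (S n)) by (intros; apply (G_incr v a b h0 (Rlt_le _ _ Hab) Hh Hv)).
assert (Hl := Lim_seq_correct u (ex_lim_seq_incr u Hi)).
assert (H1 : Rbar_le (Lim_seq u) (h0 * exp (b - a))).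
{ apply (is_lim_seq_le u (fun _ => h0 * exp (b - a))); auto.
  intros; apply G_bound; auto. apply is_lim_seq_const. }
assert (H2 : Rbar_le h0 (Lim_seq u)).
{ apply (is_lim_seq_le (fun _ => h0) u); auto.
  intros; apply (G_incr v a b h0 (Rlt_le _ _ Hab) Hh Hv). apply is_lim_seq_const. }
unfold glim. fold u. destruct (Lim_seq u) as [l| |]; simpl in *; try contradiction.
split; auto.
Qed.

Lemma G_le_glim v a b h0 : a < b -> 0 < h0 -> (forall x, a <= x <= b -> continuous v x) ->
  (forall x, a <= x <= b -> 0 < v x) ->
  forall n x, G v a b h0 n x <= glim v a b h0 x.
Proof.
intros Hab Hh Hv Hp n x. apply (is_lim_seq_incr_compare (fun n => G v a b h0 n x)).
apply glim_lim; auto. intros; apply (G_incr v a b h0 (Rlt_le _ _ Hab) Hh Hv).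
Qed.

Lemma glim_clamp v a b h0 x : a <= b -> glim v a b h0 (clamp a b x) = glim v a b h0 x.
Proof.
intros. unfold glim. f_equal. apply Lim_seq_ext. intros; apply G_clamp; auto.
Qed.

Lemma glim_eps v a b h0 : a < b -> 0 < h0 -> (forall x, a <= x <= b -> continuous v x) ->
  (forall x, a <= x <= b -> 0 < v x) ->
  forall x eps, 0 < eps -> exists N, forall n, (n >= N)%nat -> glim v a b h0 x - G v a b h0 n x < eps.
Proof.
intros Hab Hh Hv Hp x eps He.
destruct (glim_lim v a b h0 Hab Hh Hv Hp x) as [Hl _].
apply is_lim_seq_Reals in Hl. destruct (Hl eps He) as [N HN].
exists N. intros n Hn. specialize (HN n Hn). unfold R_dist in HN.
apply Rabs_lt_between' in HN. lra.
Qed.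

Lemma glim_lip v a b h0 : a < b -> 0 < h0 -> (forall x, a <= x <= b -> continuous v x) ->
  (forall x, a <= x <= b -> 0 < v x) ->
  forall x y, Rabs (glim v a b h0 x - glim v a b h0 y) <= h0 * exp (b - a) * Rabs (x - y).
Proof.
intros Hab Hh Hv Hp x y. apply Rle_plus_epsilon. intros eps He.
assert (He2 : 0 < eps / 2) by lra.
destruct (glim_eps v a b h0 Hab Hh Hv Hp x _ He2) as [N1 H1].
destruct (glim_eps v a b h0 Hab Hh Hv Hp y _ He2) as [N2 H2].
specialize (H1 (N1 + N2)%nat ltac:(lia)). specialize (H2 (N1 + N2)%nat ltac:(lia)).
assert (L := G_lip v a b h0 Hab Hh Hv Hp (N1 + N2) x y).
assert (A1 := G_le_glim v a b h0 Hab Hh Hv Hp (N1 + N2) x).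
assert (A2 := G_le_glim v a b h0 Hab Hh Hv Hp (N1 + N2) y).
set (M := h0 * exp (b - a) * Rabs (x - y)) in *.
apply Rabs_le_between in L. apply Rabs_le. lra.
Qed.

Lemma glim_cont v a b h0 : a < b -> 0 < h0 -> (forall x, a <= x <= b -> continuous v x) ->
  (forall x, a <= x <= b -> 0 < v x) -> forall x, continuous (glim v a b h0) x.
Proof.
intros Hab Hh Hv Hp x. apply (lip_cont _ x (h0 * exp (b - a))).
apply Rmult_lt_0_compat; [lra|apply exp_pos].
intros y. apply glim_lip; auto.
Qed.

Lemma nat_above r : exists K : nat, r < INR K /\ (1 <= K)%nat.
Proof.
destruct (Rle_lt_dec 0 r) as [H|H].
- destruct (nfloor_ex r H) as [n Hn]. exists (S n). rewrite S_INR. split. lra. lia.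
- exists 1%nat. simpl. split. lra. lia.
Qed.

Lemma grid_cover a hK (K : nat) x : 0 < hK -> a <= x <= a + INR K * hK ->
  exists k, (k <= K)%nat /\ Rabs (x - (a + INR k * hK)) <= hK.
Proof.
intros Hh. induction K as [|K IH]; intros Hx.
- exists 0%nat. split. lia. simpl in *. replace (x - (a + 0 * hK)) with 0 by lra. rewrite Rabs_R0. lra.
- destruct (Rle_lt_dec x (a + INR K * hK)) as [H|H].
  + destruct IH as [k [Hk Hk2]]. lra. exists k. split. lia. auto.
  + exists (S K). split. lia. rewrite S_INR in *. apply Rabs_le. lra.
Qed.

Lemma grid_N (P : nat -> nat -> Prop) : (forall k, exists N, forall n, (n >= N)%nat -> P k n) ->
  forall K, exists N, forall k, (k <= K)%nat -> forall n, (n >= N)%nat -> P k n.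
Proof.
intros H K. induction K as [|K IH].
- destruct (H 0%nat) as [N HN]. exists N. intros k Hk. replace k with 0%nat by lia. auto.
- destruct IH as [N1 H1]. destruct (H (S K)) as [N2 H2]. exists (N1 + N2)%nat.
  intros k Hk n Hn. destruct (Nat.eq_dec k (S K)) as [->|E]. apply H2; lia. apply H1; lia.
Qed.

Lemma glim_unif v a b h0 : a < b -> 0 < h0 -> (forall x, a <= x <= b -> continuous v x) ->
  (forall x, a <= x <= b -> 0 < v x) ->
  forall eps, 0 < eps -> exists N, forall n x, (n >= N)%nat -> glim v a b h0 x - G v a b h0 n x < eps.
Proof.
intros Hab Hh Hv Hp eps He.
set (B := h0 * exp (b - a)).
assert (HB : 0 < B) by (apply Rmult_lt_0_compat; [lra|apply exp_pos]).
destruct (nat_above (3 * B * (b - a) / eps)) as [K [HK HK1]].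
assert (HKp : 0 < INR K) by (apply lt_0_INR; lia).
set (hK := (b - a) / INR K).
assert (Hhk : 0 < hK) by (apply Rdiv_lt_0_compat; lra).
assert (HBh : B * hK < eps / 3).
{ unfold hK. apply Rmult_lt_reg_r with (INR K * 3 / eps). apply Rmult_lt_0_compat. lra. apply Rinv_0_lt_compat; lra.
  replace (B * ((b - a) / INR K) * (INR K * 3 / eps)) with (3 * B * (b - a) / eps) by (field; lra).
  replace (eps / 3 * (INR K * 3 / eps)) with (INR K) by (field; lra). lra. }
assert (He3 : 0 < eps / 3) by lra.
destruct (grid_N (fun k n => glim v a b h0 (a + INR k * hK) - G v a b h0 n (a + INR k * hK) < eps / 3))
  with (K := K) as [N HN].
{ intros k. apply glim_eps; auto. }
exists N. intros n x Hn.
rewrite <- glim_clamp, <- (G_clamp v a b h0 n x) by lra.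
assert (Hc := clamp_in a b x (Rlt_le _ _ Hab)). set (y := clamp a b x) in *.
destruct (grid_cover a hK K y Hhk) as [k [Hk Hd]].
{ unfold hK. replace (a + INR K * ((b - a) / INR K)) with b by (field; lra). lra. }
specialize (HN k Hk n Hn).
assert (L1 := glim_lip v a b h0 Hab Hh Hv Hp y (a + INR k * hK)).
assert (L2 := G_lip v a b h0 Hab Hh Hv Hp n y (a + INR k * hK)).
fold B in L1, L2.
assert (B * Rabs (y - (a + INR k * hK)) <= B * hK) by (apply Rmult_le_compat_l; lra).
apply Rabs_le_between in L1. apply Rabs_le_between in L2. lra.
Qed.

Lemma glim_eq v a b h0 : a < b -> 0 < h0 -> (forall x, a <= x <= b -> continuous v x) ->
  (forall x, a <= x <= b -> 0 < v x) ->
  forall x, glim v a b h0 x = h0 + RInt (fun s => Fs v a b s (glim v a b h0 s)) a (clamp a b x).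
Proof.
intros Hab Hh Hv Hp x.
set (B := h0 * exp (b - a)).
assert (HB : 0 < B) by (apply Rmult_lt_0_compat; [lra|apply exp_pos]).
set (k := fun s => Fs v a b s (glim v a b h0 s)).
assert (Hk : forall s, continuous k s) by (apply k_cont; [lra|auto|apply glim_cont; auto]).
set (Q := glim v a b h0 x - (h0 + RInt k a (clamp a b x))).
assert (Hc := clamp_in a b x (Rlt_le _ _ Hab)).
assert (Hest : forall eta, 0 < eta -> Rabs Q <= eta ^ 2 / (2 * B) + (b - a) * eta).
{ intros eta Heta.
  assert (Hd : 0 < eta ^ 2 / (2 * B)) by (apply Rdiv_lt_0_compat; nra).
  destruct (glim_unif v a b h0 Hab Hh Hv Hp _ Hd) as [N HN].
  set (kn := fun s => Fs v a b s (G v a b h0 N s)).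
  assert (Hkn : forall s, continuous kn s) by (apply k_cont; [lra|auto|apply G_cont; [lra|auto]]).
  assert (E1 : G v a b h0 (S N) x = h0 + RInt kn a (clamp a b x)) by reflexivity.
  assert (H1 := HN (S N) x ltac:(lia)).
  assert (H2 := G_le_glim v a b h0 Hab Hh Hv Hp (S N) x).
  assert (Hpt : forall s, Rabs (k s - kn s) <= eta).
  { intros s. assert (Hs1 := HN N s ltac:(lia)).
    assert (Hs2 := G_le_glim v a b h0 Hab Hh Hv Hp N s).
    assert (Hs3 := proj1 (G_incr v a b h0 (Rlt_le _ _ Hab) Hh Hv N s)).
    assert (Hs4 := proj2 (glim_lim v a b h0 Hab Hh Hv Hp s)). fold B in Hs4.
    assert (Hmono : kn s <= k s) by (apply Fs_mono; lra).
    rewrite Rabs_right by lra.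
    unfold k, kn, Fs.
    eapply Rle_trans. apply sqrt_diff.
    assert (G v a b h0 N s ^ 2 <= glim v a b h0 s ^ 2) by (apply pow_incr; lra). lra.
    rewrite <- (sqrt_pow2 eta) by lra. apply sqrt_le_1_alt.
    replace (glim v a b h0 s ^ 2 - v (clamp a b s) - (G v a b h0 N s ^ 2 - v (clamp a b s)))
      with ((glim v a b h0 s - G v a b h0 N s) * (glim v a b h0 s + G v a b h0 N s)) by ring.
    apply Rle_trans with (eta ^ 2 / (2 * B) * (2 * B)).
    apply Rmult_le_compat; lra.
    right. field. lra. }
  assert (Hint : Rabs (RInt k a (clamp a b x) - RInt kn a (clamp a b x)) <= (b - a) * eta).
  { rewrite RInt_sub by auto.
    eapply Rle_trans. apply RInt_abs_bound.
    intros s. apply cont_minus_R; auto. intros s _. apply Hpt.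
    apply Rmult_le_compat_r. lra. rewrite Rabs_right by lra. lra. }
  unfold Q. apply Rabs_le_between in Hint. apply Rabs_le. lra. }
assert (HQ : Rabs Q <= 0).
{ apply Rle_plus_epsilon. intros eps He.
  set (C := / (2 * B) + (b - a)).
  assert (HC : 0 < C) by (unfold C; assert (0 < / (2 * B)) by (apply Rinv_0_lt_compat; lra); lra).
  set (eta := Rmin 1 (eps / C)).
  assert (Heta : 0 < eta) by (apply Rmin_glb_lt; [lra|apply Rdiv_lt_0_compat; lra]).
  assert (Heta1 : eta <= 1) by apply Rmin_l.
  assert (Heta2 : eta <= eps / C) by apply Rmin_r.
  eapply Rle_trans. apply (Hest eta Heta).
  assert (eta ^ 2 / (2 * B) <= eta * / (2 * B)).
  { unfold Rdiv. apply Rmult_le_compat_r. apply Rlt_le, Rinv_0_lt_compat; lra. nra. }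
  assert (eta * C <= eps).
  { apply Rmult_le_reg_r with (/ C). apply Rinv_0_lt_compat; lra.
    replace (eta * C * / C) with eta by (field; lra). exact Heta2. }
  unfold C in *. nra. }
assert (Q = 0) by (generalize (Rabs_pos Q); intros; apply Rabs_eq_0; lra).
unfold Q in H. lra.
Qed.

Lemma glim_a v a b h0 : a < b -> 0 < h0 -> (forall x, a <= x <= b -> continuous v x) ->
  (forall x, a <= x <= b -> 0 < v x) -> glim v a b h0 a = h0.
Proof.
intros. rewrite glim_eq by auto. rewrite clamp_id by lra. rewrite RInt_point. change (h0 + 0 = h0). ring.
Qed.

Lemma glim_deriv v a b h0 : a < b -> 0 < h0 -> (forall x, a <= x <= b -> continuous v x) ->
  (forall x, a <= x <= b -> 0 < v x) ->
  forall x, a < x < b -> is_derive (glim v a b h0) x (ode_rhs v x (glim v a b h0 x)).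
Proof.
intros Hab Hh Hv Hp x Hx.
set (k := fun s => Fs v a b s (glim v a b h0 s)).
assert (Hk : forall s, continuous k s) by (apply k_cont; [lra|auto|apply glim_cont; auto]).
apply (is_derive_ext_loc (fun y => h0 + RInt k a y)).
- assert (Hd : 0 < Rmin (x - a) (b - x)) by (apply Rmin_glb_lt; lra).
  exists (mkposreal _ Hd). intros y Hy. change (Rabs (y - x) < Rmin (x - a) (b - x)) in Hy.
  assert (Rabs (y - x) < x - a) by (eapply Rlt_le_trans; [exact Hy|apply Rmin_l]).
  assert (Rabs (y - x) < b - x) by (eapply Rlt_le_trans; [exact Hy|apply Rmin_r]).
  apply Rabs_lt_between' in H. apply Rabs_lt_between' in H0.
  rewrite glim_eq by auto. rewrite (clamp_id a b y) by lra. reflexivity.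
- evar (l : R). replace (ode_rhs v x (glim v a b h0 x)) with l.
  apply (is_derive_plus (fun _ => h0) (fun y => RInt k a y)).
  apply is_derive_const. apply is_derive_RInt_all. auto.
  unfold l. change (0 + k x = ode_rhs v x (glim v a b h0 x)).
  unfold k, Fs, ode_rhs. rewrite clamp_id by lra. ring.
Qed.

Lemma exists_A (phi0 : R) (v : R -> R)
  (Hvc : forall x, phi0 <= x -> continuous v x)
  (Hpos : forall x, phi0 <= x -> 0 < v x)
  (Hgrowth : is_lim (fun x => v x * exp (- (2 * x))) p_infty p_infty) h0 :
  sqrt (v phi0) < h0 -> exists h phi1, h phi0 = h0 /\ typeA v phi0 h phi1.
Proof.
intros Hh0.
assert (Hh : 0 < h0) by (apply Rle_lt_trans with (sqrt (v phi0)); [apply sqrt_pos|auto]).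
destruct (exp_bound_contra v phi0 Hgrowth h0 (Rlt_le _ _ Hh)) as [b [Hab Hvb]].
assert (Hv : forall x, phi0 <= x <= b -> continuous v x) by (intros; apply Hvc; lra).
assert (Hp : forall x, phi0 <= x <= b -> 0 < v x) by (intros; apply Hpos; lra).
set (g := glim v phi0 b h0).
set (D := fun y => g y - sqrt (v (clamp phi0 b y))).
assert (HD : forall y, continuous D y).
{ intros y. apply cont_minus_R. apply glim_cont; auto.
  apply (continuous_comp (fun y => v (clamp phi0 b y)) sqrt). apply w_cont; auto. lra.
  apply continuous_sqrt. }
assert (Hg0 : g phi0 = h0) by (apply glim_a; auto).
assert (HD0 : 0 < D phi0) by (unfold D; rewrite Hg0, clamp_id by lra; lra).
assert (HDb : D b < 0).
{ unfold D. rewrite clamp_id by lra.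
  assert (H1 := proj2 (glim_lim v phi0 b h0 Hab Hh Hv Hp b)). fold g in H1.
  assert (H2 := G_le_glim v phi0 b h0 Hab Hh Hv Hp 0 b). simpl in H2. fold g in H2.
  apply Rnot_le_lt. intro H3.
  assert (H4 : sqrt (v b) <= g b) by lra.
  assert (H5 : sqrt (v b) ^ 2 <= g b ^ 2) by (apply pow_incr; split; [apply sqrt_pos|auto]).
  rewrite pow2_sqrt in H5 by (apply Rlt_le, Hp; lra).
  assert (H6 : g b ^ 2 <= (h0 * exp (b - phi0)) ^ 2) by (apply pow_incr; lra).
  lra. }
set (S := fun x => phi0 <= x <= b /\ forall y, phi0 <= y <= x -> 0 < D y).
destruct (completeness S) as [m [Hub Hlub]].
{ exists b. intros x [Hx _]. lra. }
{ exists phi0. split. lra. intros y Hy. replace y with phi0 by lra. auto. }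
assert (Hm1 : phi0 <= m) by (apply Hub; split; [lra|intros y Hy; replace y with phi0 by lra; auto]).
assert (Hm2 : m <= b) by (apply Hlub; intros x [Hx _]; lra).
assert (Hbelow : forall y, phi0 <= y < m -> 0 < D y).
{ intros y Hy. destruct (classic (exists x, S x /\ y < x)) as [[x [[Hx1 Hx2] Hx3]]|Hn].
  apply Hx2; lra.
  assert (m <= y); [|lra]. apply Hlub. intros x Hx. apply Rnot_lt_le. intro Hlt. apply Hn. eauto. }
assert (HDm1 : D m <= 0).
{ apply Rnot_lt_le. intro Hpos'.
  destruct (cont_eps D m (HD m) (D m) Hpos') as [del [Hdel Hd]].
  destruct (Req_dec m b) as [E|E]. subst m; lra.
  set (x' := Rmin (m + del / 2) b).
  assert (Hx' : m < x') by (apply Rmin_glb_lt; lra).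
  assert (Sx : S x').
  { split. split. lra. apply Rmin_r.
    intros y Hy. destruct (Rlt_le_dec y m). apply Hbelow; lra.
    assert (Rabs (y - m) < del).
    { apply Rabs_lt_between'. split. lra. apply Rle_lt_trans with x'. lra.
      apply Rle_lt_trans with (m + del / 2). apply Rmin_l. lra. }
    specialize (Hd y H). apply Rabs_lt_between' in Hd. lra. }
  specialize (Hub x' Sx). lra. }
assert (Hmgt : phi0 < m) by (destruct (Req_dec phi0 m) as [E|E]; [subst m; lra|lra]).
assert (HDm2 : 0 <= D m).
{ apply Rnot_lt_le. intro Hneg.
  assert (Hpos' : 0 < - D m) by lra.
  destruct (cont_eps D m (HD m) (- D m) Hpos') as [del [Hdel Hd]].
  set (y := Rmax phi0 (m - del / 2)).
  assert (Hy1 : phi0 <= y) by apply Rmax_l.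
  assert (Hy2 : y < m) by (apply Rmax_lub_lt; lra).
  assert (Rabs (y - m) < del).
  { apply Rabs_lt_between'. split. apply Rlt_le_trans with (m - del / 2). lra. apply Rmax_r. lra. }
  specialize (Hd y H). apply Rabs_lt_between' in Hd.
  specialize (Hbelow y (conj Hy1 Hy2)). lra. }
exists g, m. split. auto.
split. auto. split.
{ apply cont_right. apply glim_cont; auto. }
split. { apply cont_left. apply glim_cont; auto. }
split. { intros x Hx. apply glim_deriv; auto. lra. }
split. { intros x Hx. specialize (Hbelow x Hx). unfold D in Hbelow. rewrite clamp_id in Hbelow by lra. lra. }
assert (D m = 0) by lra. unfold D in H. rewrite clamp_id in H by lra. lra.
Qed.

Theorem proposition5 (phi0 : R) (v : R -> R)
  (Hsmooth : smooth_from v phi0)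
  (Hpos : forall x, phi0 <= x -> 0 < v x)
  (Hder : forall x, phi0 <= x -> 0 < Derive v x)
  (Hgrowth : is_lim (fun x => v x * exp (- (2 * x))) p_infty p_infty) :
  (forall h0, sqrt (v phi0) < h0 ->
     exists h phi1, h phi0 = h0 /\ typeA v phi0 h phi1) /\
  (forall h, ~ typeB v phi0 h) /\
  ~ has_separatrix v phi0.
Proof.
assert (Hvc : forall x, phi0 <= x -> continuous v x).
{ intros x Hx. destruct (Hsmooth 0%nat x Hx) as [l Hl]. apply (deriv_cont v x l). exact Hl. }
split. { intros h0 Hh0. apply exists_A; auto. }
split. { intros h. apply noB; auto. }
intros [_ [[h Hb] _]]. apply (noB phi0 v Hpos Hgrowth h Hb).
Qed.
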